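(* Let $L,R$ be positive integers and let $p=p_{-L}\cdots p_{-1}\,X\,p_1\cdots p_R$ be an injective pattern. Let $f:\{0,1\}^{L+R+1}\to\{0,1\}$ be the injective pattern-induced rule of $p$, i.e. $f(a_{-L},\dots,a_0,\dots,a_R)=1-a_0$ if $a_i=p_i$ for all $i\in\{-L,\dots,R\}\setminus\{0\}$, and $f(a_{-L},\dots,a_R)=a_0$ otherwise. Then the global transformation $\tau:\{0,1\}^{\mathbb{Z}}\to\{0,1\}^{\mathbb{Z}}$, $\tau(c)_n=f(c_{n-L},\dots,c_{n+R})$, is injective.
   Context: Patterns are finite words over the alphabet $\{0,1,X\}$, where $X$ is a wildcard standing for either state $0$ or $1$. Two words $u=u_1\cdots u_\ell$ and $v=v_1\cdots v_\ell$ of the same length over $\{0,1,X\}$ are called equal if for every position $t$ either $u_t=v_t$ or at least one of $u_t,v_t$ is $X$; otherwise they are unequal (i.e. there is a position $t$ with $u_t,v_t\in\{0,1\}$ and $u_t\neq v_t$). For a word $w=w_{-L}\cdots w_{-1}Xw_1\cdots w_R$ with $w_i\in\{0,1\}$ for $i\neq 0$ and the wildcard $X$ in position $0$, its prefix substring of length $\ell$ is $w_{-L}\cdots w_{-L+\ell-1}$ and its suffix substring of length $\ell$ is $w_{R-\ell+1}\cdots w_R$ ($1\le \ell\le L+R$). Such a word is an injective pattern if: when $L\le R$, for every $\ell$ with $L+1\le \ell\le L+R$ (i.e. every prefix substring containing $X$) the prefix substring of length $\ell$ is unequal to the suffix substring of length $\ell$; and when $L>R$, for every $\ell$ with $R+1\le\ell\le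 L+R$ (every suffix substring containing $X$) the suffix substring of length $\ell$ is unequal to the prefix substring of length $\ell$. (For example, for $L=1,R=3$ the injective patterns are $0X011$, $0X110$, $1X001$, $1X100$.) The injective pattern-induced rule flips the centre cell exactly when the neighbourhood matches the pattern (with the centre arbitrary) and leaves it unchanged otherwise. $\tau$ is injective if $c_1\ne c_2$ implies $\tau(c_1)\ne\tau(c_2)$. *)

(* Defs.v *)
From mathcomp Require Import all_boot.
From Stdlib Require Import ZArith.
Set Implicit Arguments. Unset Strict Implicit. Unset Printing Implicit Defensive.

(* Letters of the alphabet {0,1,X}: Some false = 0, Some true = 1, None = X. *)
Definition letter := option bool.

Definition letter_eq (a b : letter) : bool :=
  match a, b with Some x, Some y => x == y | _, _ => true end.

Definition word_eq (u v : seq letter) : bool :=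
  (size u == size v) && all2 letter_eq u v.

(* The word w_{-L} .. w_{-1} X w_1 .. w_R, given wl = [w_{-L};..;w_{-1}] and
   wr = [w_1;..;w_R]. *)
Definition pattern_word (wl wr : seq bool) : seq letter :=
  map Some wl ++ None :: map Some wr.

Definition prefix_sub (w : seq letter) (l : nat) : seq letter := take l w.
Definition suffix_sub (w : seq letter) (l : nat) : seq letter := drop (size w - l) w.

Definition injective_pattern (wl wr : seq bool) : Prop :=
  let L := size wl in let R := size wr in let w := pattern_word wl wr in
  if L <= R then
    forall l, L + 1 <= l <= L + R -> ~~ word_eq (prefix_sub w l) (suffix_sub w l)
  else
    forall l, R + 1 <= l <= L + R -> ~~ word_eq (suffix_sub w l) (prefix_sub w l).

(* Local rule f : {0,1}^{L+R+1} -> {0,1}, neighbourhood a = [a_{-L};..;a_0;..;a_R]: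
   flip a_0 iff a_i = p_i for all i <> 0. *)
Definition pattern_rule (wl wr : seq bool) (a : seq bool) : bool :=
  let L := size wl in
  let a0 := nth false a L in
  if (take L a == wl) && (drop L.+1 a == wr) then ~~ a0 else a0.

Definition neighbourhood (L R : nat) (c : Z -> bool) (n : Z) : seq bool :=
  mkseq (fun k => c (n - Z.of_nat L + Z.of_nat k)%Z) (L + R + 1).

Definition global_map (L R : nat) (f : seq bool -> bool) (c : Z -> bool) : Z -> bool :=
  fun n => f (neighbourhood L R c n).

(* Main.v *)
Require Import Defs.
From mathcomp Require Import all_boot zify.
From Stdlib Require Import ZArith Lia FunctionalExtensionality.

Definition pw (wl wr : seq bool) := wl ++ false :: wr.
Definition matchb (wl wr : seq bool) (c : Z -> bool) (n : Z) :=
  (take (size wl) (neighbourhood (size wl) (size wr) c n) == wl) &&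
  (drop (size wl).+1 (neighbourhood (size wl) (size wr) c n) == wr).

Lemma matchP wl wr c n : matchb wl wr c n <->
  forall k, k < size wl + size wr + 1 -> k <> size wl ->
    c (n - Z.of_nat (size wl) + Z.of_nat k)%Z = nth false (pw wl wr) k.
Proof.
rewrite /matchb /neighbourhood /pw; split.
- move=> /andP [/eqP Hl /eqP Hr] k Hk HkL.
  rewrite nth_cat; case: ltnP => Hk2.
  + have := congr1 (nth false ^~ k) Hl => /= <-.
    by rewrite nth_take // nth_mkseq //; lia.
  + have [j Hj] : exists j, k = (size wl).+1 + j by exists (k - (size wl).+1); lia.
    subst k. rewrite (_ : (size wl).+1 + j - size wl = j.+1); last by lia.
    have := congr1 (nth false ^~ j) Hr => /= <-.
    by rewrite nth_drop nth_mkseq //; lia.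
- move=> H; apply/andP; split; apply/eqP; apply: (@eq_from_nth _ false).
  + by rewrite size_takel // size_mkseq; lia.
  + move=> i; rewrite size_takel ?size_mkseq; last lia. move=> Hi'.
    rewrite nth_take // nth_mkseq; last by lia.
    by rewrite H; [rewrite nth_cat Hi' | lia | lia].
  + by rewrite size_drop size_mkseq; lia.
  + move=> i; rewrite size_drop size_mkseq => Hi.
    rewrite nth_drop nth_mkseq; last by lia.
    rewrite H; [|lia|lia]. rewrite nth_cat ifF; last by lia.
    by rewrite (_ : (size wl).+1 + i - size wl = i.+1) //; lia.
Qed.

Lemma rule_eq wl wr c n :
  pattern_rule wl wr (neighbourhood (size wl) (size wr) c n) =
  if matchb wl wr c n then ~~ c n else c n.
Proof.
rewrite /pattern_rule /matchb /neighbourhood nth_mkseq; last by lia.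
by rewrite (_ : (n - Z.of_nat (size wl) + Z.of_nat (size wl))%Z = n) //; lia.
Qed.

Lemma nth_w wl wr k : k < size wl + size wr + 1 ->
  nth None (pattern_word wl wr) k =
  if k == size wl then None else Some (nth false (pw wl wr) k).
Proof.
move=> Hk; rewrite /pattern_word /pw !nth_cat size_map.
case: ltnP => H1; first by rewrite (nth_map false) // ifF //; lia.
case: eqP => H2; first by rewrite H2 subnn.
have [j Hj] : exists j, k - size wl = j.+1 by exists (k - size wl).-1; lia.
by rewrite Hj /= (nth_map false) //; lia.
Qed.

Lemma all2_nth (T : Type) (r : T -> T -> bool) x0 (u v : seq T) :
  size u = size v -> (forall i, i < size u -> r (nth x0 u i) (nth x0 v i)) ->
  all2 r u v.
Proof.
elim: u v => [|a u IH] [|b v] //= [Hs] H.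
rewrite (H 0) //=; apply: IH => // i Hi; exact: (H i.+1).
Qed.

Lemma size_w wl wr : size (pattern_word wl wr) = size wl + size wr + 1.
Proof. by rewrite /pattern_word size_cat /= !size_map; lia. Qed.

Lemma pointwise wl wr c n d i : matchb wl wr c n -> matchb wl wr c (n + Z.of_nat d)%Z ->
  i + d < size wl + size wr + 1 ->
  letter_eq (nth None (pattern_word wl wr) i) (nth None (pattern_word wl wr) (d + i)) /\
  letter_eq (nth None (pattern_word wl wr) (d + i)) (nth None (pattern_word wl wr) i).
Proof.
move=> /matchP H2 /matchP H1 Hi.
rewrite !nth_w; try lia.
case: eqP => E1; case: eqP => E2 //=.
rewrite -H1; try lia. rewrite -H2; try lia.
rewrite (_ : (n + Z.of_nat d - Z.of_nat (size wl) + Z.of_nat i)%Z =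
   (n - Z.of_nat (size wl) + Z.of_nat (d + i))%Z); last lia.
by rewrite eqxx.
Qed.

Lemma no_two wl wr c n d : injective_pattern wl wr ->
  matchb wl wr c n -> matchb wl wr c (n + Z.of_nat d)%Z ->
  0 < d -> d <= maxn (size wl) (size wr) -> False.
Proof.
move=> Hp M1 M2 Hd0 Hd.
set N := size wl + size wr + 1.
have HP := fun i => @pointwise wl wr c n d i M1 M2.
have S1 : size (take (N - d) (pattern_word wl wr)) = N - d.
  by rewrite size_takel // size_w; lia.
have S2 : size (drop d (pattern_word wl wr)) = N - d.
  by rewrite size_drop size_w.
have W1 : word_eq (take (N - d) (pattern_word wl wr)) (drop d (pattern_word wl wr)).
  apply/andP; split; first by rewrite S1 S2.
  apply: (@all2_nth _ _ None); first by rewrite S1 S2.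
  move=> i; rewrite S1 => Hi; rewrite nth_take // nth_drop.
  by case: (HP i); first lia.
have W2 : word_eq (drop d (pattern_word wl wr)) (take (N - d) (pattern_word wl wr)).
  apply/andP; split; first by rewrite S1 S2.
  apply: (@all2_nth _ _ None); first by rewrite S1 S2.
  move=> i; rewrite S2 => Hi; rewrite nth_take // nth_drop.
  by case: (HP i); first lia.
have E : size (pattern_word wl wr) - (N - d) = d by rewrite size_w; lia.
move: Hp; rewrite /injective_pattern; cbv zeta.
case: ifP => HLR H.
- by move: (H (N - d)); rewrite /prefix_sub /suffix_sub E W1 => HH; have := HH ltac:(lia).
- by move: (H (N - d)); rewrite /prefix_sub /suffix_sub E W2 => HH; have := HH ltac:(lia).
Qed.

Lemma window wl wr c n k : injective_pattern wl wr -> matchb wl wr c n ->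
  k < size wl + size wr + 1 -> k <> size wl ->
  ~~ matchb wl wr c (n - Z.of_nat (size wl) + Z.of_nat k)%Z.
Proof.
move=> Hp M Hk HkL; apply/negP => M2.
case: (ltnP k (size wl)) => Hk2.
- have E : (n - Z.of_nat (size wl) + Z.of_nat k + Z.of_nat (size wl - k))%Z = n by lia.
  rewrite -E in M.
  apply: (@no_two _ _ _ _ _ Hp M2 M); lia.
- have E : (n - Z.of_nat (size wl) + Z.of_nat k)%Z = (n + Z.of_nat (k - size wl))%Z by lia.
  rewrite E in M2.
  apply: (@no_two _ _ _ _ _ Hp M M2); lia.
Qed.

Lemma pres1 wl wr c n : injective_pattern wl wr -> matchb wl wr c n ->
  matchb wl wr (global_map (size wl) (size wr) (pattern_rule wl wr) c) n.
Proof.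
move=> Hp M; apply/matchP => k Hk HkL.
have W := @window _ _ _ _ k Hp M Hk HkL.
rewrite /global_map rule_eq (negbTE W).
by move/matchP: M; apply.
Qed.

Lemma pres wl wr c n : injective_pattern wl wr ->
  matchb wl wr (global_map (size wl) (size wr) (pattern_rule wl wr) c) n = matchb wl wr c n.
Proof.
move=> Hp; apply/idP/idP => M; last exact: pres1.
apply/matchP => k Hk HkL.
have W := @window _ _ _ _ k Hp M Hk HkL.
have W2 : ~~ matchb wl wr c (n - Z.of_nat (size wl) + Z.of_nat k)%Z.
  by apply/negP => M'; move: W; rewrite (@pres1 _ _ _ _ Hp M').
move/matchP: M => M; rewrite -M //.
by rewrite /global_map rule_eq (negbTE W2).
Qed.

Theorem theorem3p1 (wl wr : seq bool) :
  0 < size wl -> 0 < size wr ->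
  injective_pattern wl wr ->
  forall c1 c2 : Z -> bool,
    global_map (size wl) (size wr) (pattern_rule wl wr) c1 =
    global_map (size wl) (size wr) (pattern_rule wl wr) c2 ->
    c1 = c2.
Proof.
move=> _ _ Hp c1 c2 H; apply: functional_extensionality => n.
have E1 := @pres _ _ c1 n Hp; have E2 := @pres _ _ c2 n Hp.
rewrite H in E1.
have := congr1 (fun f => f n) H; rewrite /global_map !rule_eq -E1 E2.
by case: (matchb _ _ c2 n) => /= ; [move/negb_inj|].
Qed.
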